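(* Let $K\in K(2^{\mathbb{N}})$ be pseudo-tall. Then the ideal $\mathcal{I}_K$ has a Borel selector if and only if $K$ has a Borel pseudo-selector.
   Context: $K(2^{\mathbb{N}})$ is the hyperspace of closed subsets of $2^{\mathbb{N}}$; subsets of $\mathbb{N}$ are identified with elements of $2^{\mathbb{N}}$. $\downarrow K=\{x:\exists y\in K\ x\subseteq y\}$. $K$ is pseudo-tall if every infinite $x\subseteq\mathbb{N}$ has an infinite subset in $\downarrow K$. $\mathcal{I}_K$ is the ideal generated by $K$: $x\in\mathcal{I}_K$ iff $x\subseteq y_0\cup\dots\cup y_{n-1}$ for some $y_0,\dots,y_{n-1}\in K$. A Borel selector for a tall family $\mathcal{C}$ is a Borel $S:2^{\mathbb{N}}\to2^{\mathbb{N}}$ with $S(x)\subseteq x$, $S(x)\in\mathcal{C}$, and $S(x)$ infinite whenever $x$ is infinite. A Borel pseudo-selector for $K$ is a Borel $S:2^{\mathbb{N}}\to2^{\mathbb{N}}$ with $S(x)\subseteq x$, $S(x)\in\downarrow K$, and $S(x)$ infinite whenever $x$ is infinite. *)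

(* Defs.v *)
From Stdlib Require Import List Arith.

(* 2^N, identified with subsets of N *)
Definition cantor := nat -> bool.

Definition subsetN (x y : cantor) : Prop := forall n, x n = true -> y n = true.

Definition infiniteN (x : cantor) : Prop := forall m, exists n, m <= n /\ x n = true.

(* product topology on 2^N: basic open sets are cylinders determined by finite initial segments *)
Definition open_set (U : cantor -> Prop) : Prop :=
  forall x, U x -> exists n, forall y, (forall k, k < n -> y k = x k) -> U y.

Definition closed_set (F : cantor -> Prop) : Prop := open_set (fun x => ~ F x).

Inductive borel : (cantor -> Prop) -> Prop :=
| borel_open : forall U, open_set U -> borel U
| borel_compl : forall A, borel A -> borel (fun x => ~ A x)
| borel_cunion : forall A : nat -> cantor -> Prop,
    (forall i, borel (A i)) -> borel (fun x => exists i, A i x)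
| borel_ext : forall A B, borel A -> (forall x, A x <-> B x) -> borel B.

Definition borel_fun (S : cantor -> cantor) : Prop :=
  forall U, open_set U -> borel (fun x => U (S x)).

Definition downK (K : cantor -> Prop) (x : cantor) : Prop :=
  exists y, K y /\ subsetN x y.

Definition pseudo_tall (K : cantor -> Prop) : Prop :=
  forall x, infiniteN x -> exists z, subsetN z x /\ infiniteN z /\ downK K z.

Definition ideal_gen (K : cantor -> Prop) (x : cantor) : Prop :=
  exists l : list cantor, (forall y, In y l -> K y) /\
    (forall n, x n = true -> exists y, In y l /\ y n = true).

Definition borel_selector (C : cantor -> Prop) (S : cantor -> cantor) : Prop :=
  borel_fun S /\
  (forall x, subsetN (S x) x) /\
  (forall x, C (S x)) /\
  (forall x, infiniteN x -> infiniteN (S x)).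

Definition borel_pseudo_selector (K : cantor -> Prop) (S : cantor -> cantor) : Prop :=
  borel_selector (downK K) S.

(* Main.v *)
Require Import Defs.
From Stdlib Require Import List Arith Lia Classical ClassicalEpsilon Bool.
Import ListNotations.

Lemma borel_const (P : Prop) : borel (fun _ => P).
Proof. apply borel_open. intros x H. exists 0. intros; auto. Qed.

Lemma borel_or (A B : cantor -> Prop) : borel A -> borel B -> borel (fun x => A x \/ B x).
Proof.
  intros HA HB.
  apply borel_ext with (A := fun x => exists i, (fun i : bool => if i then A else B) (Nat.eqb i 0) x).
  - apply borel_cunion. intros i. destruct (Nat.eqb i 0); auto.
  - intros x; split.
    + intros [i Hi]. destruct (Nat.eqb i 0); auto.
    + intros [H|H]; [exists 0 | exists 1]; simpl; auto.
Qed.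

Lemma borel_and (A B : cantor -> Prop) : borel A -> borel B -> borel (fun x => A x /\ B x).
Proof.
  intros HA HB.
  eapply borel_ext. apply borel_compl. apply borel_or; apply borel_compl; [exact HA | exact HB].
  intros x; simpl. split.
  - intros H. split; [apply NNPP; intro; apply H; left | apply NNPP; intro; apply H; right]; auto.
  - intros [H1 H2] [H|H]; auto.
Qed.

Lemma borel_not (A : cantor -> Prop) : borel A -> borel (fun x => ~ A x).
Proof. apply borel_compl. Qed.

Lemma borel_impl (A B : cantor -> Prop) : borel A -> borel B -> borel (fun x => A x -> B x).
Proof.
  intros HA HB. eapply borel_ext. apply borel_or. apply borel_compl; exact HA. exact HB.
  intros x; simpl. split.
  - intros [H|H] H'; auto. contradiction.
  - intros H. destruct (classic (A x)); auto.
Qed.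

Lemma borel_ex (A : nat -> cantor -> Prop) : (forall i, borel (A i)) -> borel (fun x => exists i, A i x).
Proof. apply borel_cunion. Qed.

Lemma borel_all (A : nat -> cantor -> Prop) : (forall i, borel (A i)) -> borel (fun x => forall i, A i x).
Proof.
  intros H. eapply borel_ext. apply borel_compl. apply borel_ex. intros i. apply borel_compl, H.
  intros x; simpl; split.
  - intros H1 i. apply NNPP; intro; apply H1; eauto.
  - intros H1 [i Hi]; auto.
Qed.

Lemma borel_ex_list (n : nat) (A : list bool -> cantor -> Prop) :
  (forall s, borel (A s)) -> borel (fun x => exists s, length s = n /\ A s x).
Proof.
  revert A; induction n; intros A H.
  - eapply borel_ext. apply (H []). intros x; split.
    + intros; exists []; auto.
    + intros [s [Hs Hx]]. destruct s; simpl in *; auto; discriminate.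
  - eapply borel_ext. apply (IHn (fun s x => A (true :: s) x \/ A (false :: s) x)).
    intros s. apply borel_or; apply H.
    intros x; split.
    + intros [s [Hs [Hx|Hx]]]; eexists; split; [|exact Hx| |exact Hx]; simpl; auto.
    + intros [s [Hs Hx]]. destruct s as [|b s]; simpl in Hs; [discriminate|].
      exists s; split; [lia|]. destruct b; auto.
Qed.

Lemma borel_preimage (B : cantor -> Prop) S : borel B -> borel_fun S -> borel (fun x => B (S x)).
Proof.
  intros HB HS; induction HB.
  - apply HS; auto.
  - apply borel_compl; auto.
  - apply borel_cunion; auto.
  - eapply borel_ext; eauto. intros x; apply H.
Qed.

Lemma open_bit n b : open_set (fun x : cantor => x n = b).
Proof. intros x Hx. exists (S n). intros y Hy. rewrite Hy; auto. Qed.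

Lemma nth_map_seq' (g : nat -> bool) N k : k < N -> nth k (map g (seq 0 N)) false = g k.
Proof.
  intros Hk. rewrite nth_indep with (d' := g 0) by (rewrite length_map, length_seq; auto).
  rewrite map_nth, seq_nth; auto.
Qed.

Lemma borel_fun_bits (f : cantor -> cantor) :
  (forall n, borel (fun a => f a n = true)) -> borel_fun f.
Proof.
  intros Hb U HU.
  eapply borel_ext with (A := fun a => exists N, exists s, length s = N /\
     ((forall y, (forall k, k < N -> y k = nth k s false) -> U y) /\
      (forall k, k < N -> f a k = nth k s false))).
  - apply borel_ex; intros N. apply borel_ex_list. intros s.
    apply borel_and. apply borel_const.
    apply borel_all; intros k. apply borel_impl. apply borel_const.
    destruct (nth k s false).
    + apply Hb.
    + eapply borel_ext. apply borel_compl, (Hb k). intros a; simpl.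
      destruct (f a k); split; congruence.
  - intros a; split.
    + intros [N [s [Hs [H1 H2]]]]. apply H1. intros k Hk. apply H2; auto.
    + intros Ha. destruct (HU _ Ha) as [N HN]. exists N, (map (f a) (seq 0 N)).
      rewrite length_map, length_seq. split; auto. split.
      * intros y Hy. apply HN. intros k Hk. rewrite Hy, nth_map_seq'; auto.
      * intros k Hk. rewrite nth_map_seq'; auto.
Qed.

Fixpoint pre (P : list bool -> Prop) (n : nat) : list bool :=
  match n with
  | 0 => []
  | S n => let s := pre P n in
      if excluded_middle_informative (P (s ++ [false])) then s ++ [false] else s ++ [true]
  end.

Definition br (P : list bool -> Prop) (k : nat) : bool := nth k (pre P (S k)) false.

Lemma len_pre P n : length (pre P n) = n.
Proof.
  induction n; simpl; auto. destruct excluded_middle_informative;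
  rewrite length_app, IHn; simpl; lia.
Qed.

Lemma nth_last (s : list bool) b : nth (length s) (s ++ [b]) false = b.
Proof. rewrite app_nth2 by lia. rewrite Nat.sub_diag. reflexivity. Qed.

Lemma pre_S P n : pre P (S n) = pre P n ++ [br P n].
Proof.
  unfold br. simpl. destruct excluded_middle_informative.
  - f_equal. f_equal. rewrite <- (len_pre P n) at 1. rewrite nth_last; auto.
  - f_equal. f_equal. rewrite <- (len_pre P n) at 1. rewrite nth_last; auto.
Qed.

Lemma nth_pre P n k : k < n -> nth k (pre P n) false = br P k.
Proof.
  induction n; intros Hk; [lia|].
  rewrite pre_S. destruct (Nat.eq_dec k n).
  - subst k. rewrite <- (len_pre P n) at 1. rewrite nth_last. auto.
  - rewrite app_nth1 by (rewrite len_pre; lia). apply IHn; lia.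
Qed.

Lemma pre_good (P : list bool -> Prop) :
  P [] -> (forall s, P s -> P (s ++ [false]) \/ P (s ++ [true])) -> forall n, P (pre P n).
Proof.
  intros H0 Hs n; induction n; simpl; auto.
  destruct excluded_middle_informative; auto.
  destruct (Hs _ IHn); auto. contradiction.
Qed.

Definition agree (y : cantor) (s : list bool) : Prop :=
  forall k, k < length s -> y k = nth k s false.

Lemma agree_app y s b : agree y s -> y (length s) = b -> agree y (s ++ [b]).
Proof.
  intros H Hb k Hk. rewrite length_app in Hk; simpl in Hk.
  destruct (Nat.eq_dec k (length s)).
  - subst. rewrite nth_last; auto.
  - rewrite app_nth1 by lia. apply H; lia.
Qed.

Lemma agree_pre P y n : agree y (pre P n) <-> forall k, k < n -> y k = br P k.
Proof.
  unfold agree; rewrite len_pre. split; intros H k Hk; rewrite H by auto;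
  rewrite nth_pre; auto.
Qed.

Lemma cluster (z : nat -> cantor) :
  exists y : cantor, forall N M, exists N', M <= N' /\ forall k, k < N -> z N' k = y k.
Proof.
  set (P := fun s => forall M, exists N', M <= N' /\ agree (z N') s).
  assert (HP : forall n, P (pre P n)).
  { apply pre_good.
    - intros M; exists M; split; auto. intros k Hk; simpl in Hk; lia.
    - intros s Hs. destruct (classic (P (s ++ [false]))) as [|H1]; auto.
      destruct (classic (P (s ++ [true]))) as [|H2]; auto. exfalso.
      apply not_all_ex_not in H1 as [M1 H1]. apply not_all_ex_not in H2 as [M2 H2].
      destruct (Hs (max M1 M2)) as [N' [HN' HA]].
      destruct (z N' (length s)) eqn:E.
      + apply H2. exists N'; split; [lia|]. apply agree_app; auto.
      + apply H1. exists N'; split; [lia|]. apply agree_app; auto. }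
  exists (br P). intros N M. destruct (HP N M) as [N' [HN' HA]].
  exists N'; split; auto. apply agree_pre; auto.
Qed.

Lemma pre_borel (P : cantor -> list bool -> Prop) :
  (forall s, borel (fun a => P a s)) -> forall n s, borel (fun a => pre (P a) n = s).
Proof.
  intros HP n; induction n; intros s.
  - apply (borel_const ([] = s)).
  - eapply borel_ext with (A := fun a => exists s0, length s0 = n /\ (pre (P a) n = s0 /\
        ((P a (s0 ++ [false]) /\ s = s0 ++ [false]) \/ (~ P a (s0 ++ [false]) /\ s = s0 ++ [true])))).
    + apply borel_ex_list. intros s0. apply borel_and; auto.
      apply borel_or; apply borel_and; try apply borel_const; auto. apply borel_compl; auto.
    + intros a; split.
      * intros [s0 [Hl [Hp [[H1 H2]|[H1 H2]]]]]; simpl; rewrite Hp;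
        destruct excluded_middle_informative; subst; auto; contradiction.
      * intros Hs. exists (pre (P a) n). split; [apply len_pre|]. split; auto.
        simpl in Hs. destruct excluded_middle_informative; auto.
Qed.

Lemma br_borel (P : cantor -> list bool -> Prop) :
  (forall s, borel (fun a => P a s)) -> forall k, borel (fun a => br (P a) k = true).
Proof.
  intros HP k. eapply borel_ext with (A := fun a => exists s, length s = S k /\
     (pre (P a) (S k) = s /\ (fun _ => nth k s false = true) a)).
  - apply borel_ex_list. intros s. apply borel_and. apply pre_borel; auto. apply borel_const.
  - intros a; split.
    + intros [s [_ [H1 H2]]]. unfold br. rewrite H1. auto.
    + intros H. exists (pre (P a) (S k)). split; [apply len_pre|]. split; auto.
Qed.

Definition approx (K : cantor -> Prop) (j N : nat) (b : cantor) : Prop :=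
  exists l : list cantor, length l <= j /\ (forall y, In y l -> K y) /\
    forall n, n < N -> b n = true -> exists y, In y l /\ y n = true.

Definition bd (a : cantor) (m : nat) (y : cantor) : cantor :=
  fun n => a n && Nat.leb m n && negb (y n).

Definition G K a j m y := K y /\ forall N, approx K j N (bd a m y).
Definition E K a j m s := exists y, G K a j m y /\ agree y s.
Definition W K a j m := E K a j m [].
Definition sel K a j m := W K a j m /\ (forall j', j' < j -> forall m', ~ W K a j' m') /\
   (forall m', m' < m -> ~ W K a j m').
Definition LL K a j m := br (E K a j m).
Definition fsel K (a : cantor) : cantor := fun n =>
  if excluded_middle_informative (exists j m, sel K a j m /\ a n = true /\ LL K a j m n = true)
  then true else false.

Lemma approx_local K j N b b' : (forall k, k < N -> b k = b' k) -> approx K j N b -> approx K j N b'.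
Proof.
  intros H [l [H1 [H2 H3]]]. exists l; repeat split; auto.
  intros n Hn Hb. apply H3; auto. rewrite H; auto.
Qed.

Lemma approx_monoN K j N N' b : N' <= N -> approx K j N b -> approx K j N' b.
Proof.
  intros H [l [H1 [H2 H3]]]. exists l; repeat split; auto.
  intros n Hn Hb. apply H3; auto. lia.
Qed.

Lemma approx_sub K j N b b' : (forall n, b n = true -> b' n = true) -> approx K j N b' -> approx K j N b.
Proof.
  intros H [l [H1 [H2 H3]]]. exists l; repeat split; auto.
Qed.

Lemma closed_agree K y : closed_set K -> (forall n, exists z, K z /\ forall k, k < n -> z k = y k) -> K y.
Proof.
  intros hK H. apply NNPP; intro Hy. destruct (hK y Hy) as [n Hn].
  destruct (H n) as [z [Hz Hzk]]. apply (Hn z); auto.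
Qed.

Lemma E_iff K a j m s : closed_set K ->
  (E K a j m s <-> forall N, exists y, K y /\ agree y s /\ approx K j N (bd a m y)).
Proof.
  intros hK; split.
  - intros [y [[Hy HN] Ha]] N. exists y; auto.
  - intros H.
    set (g := fun N => proj1_sig (constructive_indefinite_description _ (H N))).
    assert (Hg : forall N, K (g N) /\ agree (g N) s /\ approx K j N (bd a m (g N))).
    { intros N. unfold g. destruct constructive_indefinite_description; simpl; auto. }
    destruct (cluster g) as [y Hy]. exists y. split; [split|].
    + apply closed_agree; auto. intros n. destruct (Hy n 0) as [N' [_ HN']].
      exists (g N'). split; [apply Hg|]. auto.
    + intros N. destruct (Hy N N) as [N' [HN' HA]].
      apply approx_local with (b := bd a m (g N')).
      * intros k Hk. unfold bd. rewrite HA; auto.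
      * apply approx_monoN with N'; auto. apply Hg.
    + intros k Hk. destruct (Hy (length s) 0) as [N' [_ HA]].
      rewrite <- HA by auto. apply Hg; auto.
Qed.

Lemma E_borel K j m s : closed_set K -> borel (fun a => E K a j m s).
Proof.
  intros hK. eapply borel_ext; [| intros a; symmetry; apply E_iff; auto].
  apply borel_all. intros N. apply borel_open.
  intros a [y [Hy [Ha Hap]]]. exists N. intros a' Hk. exists y; repeat split; auto.
  apply approx_local with (b := bd a m y); auto.
  intros k Hkk. unfold bd. rewrite Hk; auto.
Qed.

Lemma E_step K a j m s : E K a j m s -> E K a j m (s ++ [false]) \/ E K a j m (s ++ [true]).
Proof.
  intros [y [Hy Ha]]. destruct (y (length s)) eqn:Hb.
  - right. exists y; split; auto. apply agree_app; auto.
  - left. exists y; split; auto. apply agree_app; auto.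
Qed.

Lemma E_pre K a j m : E K a j m [] -> forall n, E K a j m (pre (E K a j m) n).
Proof. intros H. apply pre_good; auto. apply E_step. Qed.

Lemma G_LL K a j m : closed_set K -> W K a j m -> G K a j m (LL K a j m).
Proof.
  intros hK HW. pose proof (E_pre K a j m HW) as HE. split.
  - apply closed_agree; auto. intros n. destruct (HE n) as [z [[Hz _] Ha]].
    exists z; split; auto. apply agree_pre; auto.
  - intros N. destruct (HE N) as [z [[Hz HN] Ha]].
    apply approx_local with (b := bd a m z); auto.
    intros k Hk. unfold bd. rewrite (proj1 (agree_pre _ _ _) Ha k Hk). reflexivity.
Qed.

Lemma sel_unique K a j m j' m' : sel K a j m -> sel K a j' m' -> j = j' /\ m = m'.
Proof.
  intros [H1 [H2 H3]] [H1' [H2' H3']].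
  assert (j = j').
  { destruct (lt_eq_lt_dec j j') as [[h|h]|h]; auto.
    - exfalso; eapply H2'; eauto.
    - exfalso; eapply H2; eauto. }
  subst j'. split; auto.
  destruct (lt_eq_lt_dec m m') as [[h|h]|h]; auto.
  - exfalso; eapply H3'; eauto.
  - exfalso; eapply H3; eauto.
Qed.

Lemma least (P : nat -> Prop) : (exists n, P n) -> exists n, P n /\ forall k, k < n -> ~ P k.
Proof.
  intros [n Hn]. revert Hn. induction n using (well_founded_induction lt_wf). intros Hn.
  destruct (classic (exists k, k < n /\ P k)) as [[k [Hk HPk]]|Hno].
  - apply (H k Hk HPk).
  - exists n; split; auto. intros k Hk HPk. apply Hno; eauto.
Qed.

Lemma sel_exists K a : (exists j m, W K a j m) -> exists j m, sel K a j m.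
Proof.
  intros Hex. destruct (least (fun j => exists m, W K a j m) Hex) as [j [[m0 Hm0] Hj]].
  destruct (least (fun m => W K a j m) (ex_intro _ m0 Hm0)) as [m [Hm Hmin]].
  exists j, m. split; auto. split; auto.
  intros j' Hj' m' Hw. apply (Hj j' Hj'). eauto.
Qed.

Lemma fsel_true K a n : fsel K a n = true <->
  exists j m, sel K a j m /\ a n = true /\ LL K a j m n = true.
Proof. unfold fsel. destruct excluded_middle_informative; split; auto; discriminate. Qed.

Lemma sel_borel K j m : closed_set K -> borel (fun a => sel K a j m).
Proof.
  intros hK. unfold sel, W. apply borel_and. apply E_borel; auto.
  apply borel_and.
  - apply borel_all; intros j'. apply borel_impl. apply borel_const.
    apply borel_all; intros m'. apply borel_compl, E_borel; auto.
  - apply borel_all; intros m'. apply borel_impl. apply borel_const.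
    apply borel_compl, E_borel; auto.
Qed.

Lemma fsel_borel K : closed_set K -> borel_fun (fsel K).
Proof.
  intros hK. apply borel_fun_bits. intros n.
  eapply borel_ext; [| intros a; symmetry; apply fsel_true].
  apply borel_ex; intros j. apply borel_ex; intros m.
  apply borel_and. apply sel_borel; auto.
  apply borel_and. apply borel_open, open_bit.
  unfold LL. apply (br_borel (fun a s => E K a j m s)). intros s; apply E_borel; auto.
Qed.

Lemma fsel_sub K a : subsetN (fsel K a) a.
Proof. intros n Hn. apply fsel_true in Hn as [j [m [_ [H _]]]]; auto. Qed.

Lemma fsel_down K a y0 : closed_set K -> K y0 -> downK K (fsel K a).
Proof.
  intros hK Hy0. destruct (classic (exists j m, sel K a j m)) as [[j [m Hs]]|Hno].
  - exists (LL K a j m). split.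
    + apply (G_LL K a j m hK (proj1 Hs)).
    + intros n Hn. apply fsel_true in Hn as [j' [m' [Hs' [_ H]]]].
      destruct (sel_unique _ _ _ _ _ _ Hs Hs'); subst; auto.
  - exists y0. split; auto. intros n Hn. apply fsel_true in Hn as [j' [m' [Hs' _]]].
    exfalso; eauto.
Qed.

Lemma fsel_inf K a : closed_set K -> ideal_gen K a -> infiniteN a -> infiniteN (fsel K a).
Proof.
  intros hK [l [Hl Hcov]] Hinf.
  destruct (Hinf 0) as [n0 [_ Hn0]]. destruct (Hcov n0 Hn0) as [yy [Hyy _]].
  destruct l as [|y0 l']; [destruct Hyy|].
  assert (Ky0 : K y0) by (apply Hl; left; auto).
  assert (HW : exists j m, W K a j m).
  { exists (length l'), 0. exists y0. split; [split|]; auto.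
    - intros N. exists l'. repeat split; auto.
      + intros y Hy; apply Hl; right; auto.
      + intros n Hn Hb. unfold bd in Hb. apply andb_true_iff in Hb as [Hb Hy].
        apply andb_true_iff in Hb as [Ha _]. destruct (Hcov n Ha) as [z [[Hz|Hz] Hzn]].
        * subst z. rewrite Hzn in Hy. discriminate.
        * eauto.
    - intros k Hk; simpl in Hk; lia. }
  destruct (sel_exists K a HW) as [j [m Hs]].
  pose proof (G_LL K a j m hK (proj1 Hs)) as [_ HG].
  apply NNPP; intro Hnot.
  apply not_all_ex_not in Hnot as [M HM].
  assert (HM' : forall n, M <= n -> a n = true -> LL K a j m n = false).
  { intros n Hn Ha. destruct (LL K a j m n) eqn:E; auto. exfalso. apply HM. exists n; split; auto.
    apply fsel_true. exists j, m; auto. }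
  set (mx := max m M).
  set (bc := fun n => a n && Nat.leb mx n).
  assert (Hbc : forall N, approx K j N bc).
  { intros N. apply approx_sub with (b' := bd a m (LL K a j m)); auto.
    intros n Hn. unfold bc, bd in *. apply andb_true_iff in Hn as [Ha Hle].
    apply Nat.leb_le in Hle. rewrite Ha, HM' by (auto; lia). simpl.
    rewrite andb_true_r. apply Nat.leb_le. lia. }
  destruct j as [|j''].
  - destruct (Hinf mx) as [n [Hn Han]]. destruct (Hbc (S n)) as [l0 [Hl0 [_ Hc]]].
    destruct l0; [|simpl in Hl0; lia].
    destruct (Hc n) as [z [[] _]]; auto. unfold bc. rewrite Han. simpl. apply Nat.leb_le; auto.
  - apply (proj1 (proj2 Hs) j'' (Nat.lt_succ_diag_r _) mx).
    unfold W. apply E_iff; auto. intros N.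
    destruct (Hbc N) as [l0 [Hl0 [HK Hc]]].
    destruct l0 as [|y l1].
    + exists y0. repeat split; auto.
      * intros k Hk; simpl in Hk; lia.
      * exists []. split; [simpl; lia|]. split; [intros y []|].
        intros n Hn Hb. apply Hc; auto. unfold bd, bc in *.
        apply andb_true_iff in Hb as [Hb _]. auto.
    + exists y. repeat split.
      * apply HK; left; auto.
      * intros k Hk; simpl in Hk; lia.
      * exists l1. repeat split. simpl in Hl0; lia.
        intros z Hz; apply HK; right; auto.
        intros n Hn Hb. unfold bd in Hb. apply andb_true_iff in Hb as [Hb Hy].
        destruct (Hc n Hn Hb) as [z [[Hz|Hz] Hzn]].
        -- subst z. rewrite Hzn in Hy. discriminate.
        -- eauto.
Qed.

Theorem mainTheorem15 (K : cantor -> Prop) (hK : closed_set K) (hpt : pseudo_tall K) :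
  (exists S, borel_selector (ideal_gen K) S) <-> (exists S, borel_pseudo_selector K S).
Proof.
  assert (Hne : exists y0, K y0).
  { destruct (hpt (fun _ => true)) as [z [_ [_ [y0 [Hy0 _]]]]].
    - intros m; exists m; auto.
    - eauto. }
  destruct Hne as [y0 Hy0].
  split.
  - intros [S [HB [Hsub [HC Hinf]]]]. exists (fun x => fsel K (S x)).
    split; [|split; [|split]].
    + intros U HU. apply (borel_preimage (fun a => U (fsel K a)) S); auto.
      apply fsel_borel; auto.
    + intros x n Hn. apply Hsub, (fsel_sub K); auto.
    + intros x. apply fsel_down with y0; auto.
    + intros x Hx. apply fsel_inf; auto.
  - intros [S [HB [Hsub [HC Hinf]]]]. exists S. split; [|split; [|split]]; auto.
    intros x. destruct (HC x) as [y [Hy Hxy]]. exists [y]. split.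
    + intros z [Hz|[]]; subst; auto.
    + intros n Hn. exists y; split; [left|]; auto.
Qed.
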